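(* Let $A$ be a centrally essential ring such that the factor ring $A/J(A)$ is commutative, where $J(A)$ is the Jacobson radical. Then every minimal right ideal $S$ of $A$ is contained in the center $Z(A)$. In particular, every minimal right ideal of $A$ is a two-sided ideal, and the right socle $\mathrm{Soc}\,A_A$ is contained in $Z(A)$.
   Context: All rings are associative, unital and non-zero. $Z(A)$ denotes the center of a ring $A$. A ring $A$ is centrally essential if either $A$ is commutative or for every non-central element $a\in A$ there exist non-zero central elements $x,y\in Z(A)$ with $ax=y$. *)

(* Defs.v *)
From mathcomp Require Import all_boot all_algebra.
Set Implicit Arguments. Unset Strict Implicit. Unset Printing Implicit Defensive.
Import GRing.Theory.
Local Open Scope ring_scope.

Definition central (A : nzRingType) (x : A) : Prop := forall y : A, x * y = y * x.

Definition center (A : nzRingType) : A -> Prop := fun x => central x.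

Definition is_commutative (A : nzRingType) : Prop := forall x y : A, x * y = y * x.

Definition centrally_essential (A : nzRingType) : Prop :=
  is_commutative A \/
  forall a : A, ~ central a ->
    exists x y : A, [/\ central x, central y, x != 0, y != 0 & a * x = y].

Definition sub_set (A : nzRingType) (I J : A -> Prop) : Prop := forall x, I x -> J x.

Definition right_ideal (A : nzRingType) (I : A -> Prop) : Prop :=
  [/\ I 0, (forall x y, I x -> I y -> I (x - y)) & (forall x a, I x -> I (x * a))].

Definition left_closed (A : nzRingType) (I : A -> Prop) : Prop :=
  forall a x, I x -> I (a * x).

Definition two_sided_ideal (A : nzRingType) (I : A -> Prop) : Prop :=
  right_ideal I /\ left_closed I.

Definition maximal_right_ideal (A : nzRingType) (M : A -> Prop) : Prop :=
  [/\ right_ideal M, ~ M 1 &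
      forall I : A -> Prop, right_ideal I -> sub_set M I -> ~ I 1 -> sub_set I M].

Definition jacobson (A : nzRingType) : A -> Prop :=
  fun x => forall M : A -> Prop, maximal_right_ideal M -> M x.

(* A/J(A) is commutative: all commutators lie in J(A) *)
Definition comm_mod_jacobson (A : nzRingType) : Prop :=
  forall x y : A, jacobson (x * y - y * x).

Definition minimal_right_ideal (A : nzRingType) (S : A -> Prop) : Prop :=
  [/\ right_ideal S, (exists x, S x /\ x != 0) &
      forall T : A -> Prop, right_ideal T -> sub_set T S ->
        (forall x, T x -> x = 0) \/ sub_set S T].

(* right socle Soc A_A: the sum of all minimal right ideals, i.e. the smallest
   right ideal containing every minimal right ideal *)
Definition right_socle (A : nzRingType) : A -> Prop :=
  fun x => forall I : A -> Prop, right_ideal I ->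
    (forall S : A -> Prop, minimal_right_ideal S -> sub_set S I) -> I x.

(* Main.v *)
Require Import Defs.
From mathcomp Require Import all_boot all_algebra.
From Stdlib Require Import Classical.
Set Implicit Arguments. Unset Strict Implicit.
Import GRing.Theory.
Local Open Scope ring_scope.

Section Proofs.
Variable A : nzRingType.

Lemma ann_jac (S : A -> Prop) (s j : A) :
  minimal_right_ideal S -> S s -> jacobson j -> s * j = 0.
Proof.
move=> [[S0 SB SM] _ Smin] Ss Jj.
have [->|sn0] := eqVneq s 0; first by rewrite mul0r.
apply: (Jj (fun a => s * a = 0)); split.
- split; first by rewrite mulr0.
  + by move=> x y hx hy; rewrite mulrBr hx hy subrr.
  + by move=> x a hx; rewrite mulrA hx mul0r.
- by rewrite mulr1; apply/eqP.
move=> I; case=> I0 IB IM MI nI1 x Ix.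
set T := fun z => exists i, I i /\ z = s * i.
have Tr : right_ideal T.
  rewrite /T; split; first by exists 0; rewrite ?mulr0.
  + by move=> u v [i [Ii ->]] [k [Ik ->]]; exists (i - k); split; [exact: IB | rewrite mulrBr].
  + by move=> u a [i [Ii ->]]; exists (i * a); split; [exact: IM | rewrite mulrA].
have TS : sub_set T S by move=> u [i [Ii ->]]; apply: SM.
case: (Smin T Tr TS) => [H|H].
  by apply: H; exists x.
exfalso; have [i [Ii si]] := H s Ss.
have M1 : s * (1 - i) = 0 by rewrite mulrBr mulr1 -si subrr.
have I1 := MI _ M1.
have I2 := IB _ _ I0 Ii.
have := IB _ _ I1 I2.
by rewrite sub0r opprK subrK.
Qed.

Lemma comm_kill (S : A -> Prop) (s x y : A) :
  comm_mod_jacobson A -> minimal_right_ideal S -> S s -> s * (x * y - y * x) = 0.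
Proof. by move=> C mS Ss; apply: (ann_jac mS Ss (C x y)). Qed.

Lemma all_central (S : A -> Prop) (d : A) :
  comm_mod_jacobson A -> minimal_right_ideal S -> S d -> central d -> d != 0 ->
  forall s, S s -> central s.
Proof.
move=> C mS Sd cd dn0 s Ss.
have mS' := mS; case: mS' => [[S0 SB SM] _ Smin].
set T := fun z => exists a, z = d * a.
have Tr : right_ideal T.
  rewrite /T; split; first by exists 0; rewrite ?mulr0.
  + by move=> u v [a ->] [b ->]; exists (a - b); rewrite mulrBr.
  + by move=> u b [a ->]; exists (a * b); rewrite mulrA.
have TS : sub_set T S by move=> u [a ->]; apply: SM.
case: (Smin T Tr TS) => [H|H].
  by exfalso; move/eqP: dn0; apply; apply: H; exists 1; rewrite mulr1.
have [a ea] : exists a, s = d * a := H s Ss.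
rewrite ea => y.
have k := comm_kill a y C mS Sd.
rewrite mulrBr in k; move/eqP: k; rewrite subr_eq0 => /eqP k.
by rewrite -mulrA k !mulrA (cd y).
Qed.

Lemma part1 : centrally_essential A -> comm_mod_jacobson A ->
  forall S : A -> Prop, minimal_right_ideal S -> sub_set S (@center A).
Proof.
move=> [Hc|Hce] C S mS s Ss; first by move=> y; apply: Hc.
case: (classic (central s)) => // ns.
have [x [y [cx cy xn yn sxy]]] := Hce s ns.
have Sy : S y by case: mS => [[_ _ SM] _ _]; rewrite -sxy; apply: SM.
exact: (all_central C mS Sy cy yn Ss).
Qed.

End Proofs.

Theorem mainTheorem3 (A : nzRingType) :
  centrally_essential A -> comm_mod_jacobson A ->
  [/\ (forall S : A -> Prop, minimal_right_ideal S -> sub_set S (@center A)),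
      (forall S : A -> Prop, minimal_right_ideal S -> two_sided_ideal S) &
      sub_set (@right_socle A) (@center A)].
Proof.
move=> ce C.
have P1 := part1 ce C.
split => //.
- move=> S mS; split; first by case: mS.
  move=> a x Sx; have cx := P1 S mS x Sx.
  rewrite -cx; by case: mS => [[_ _ SM] _ _]; apply: SM.
- move=> x Hx.
  set I := fun z : A => central z /\ forall a b c, z * a * (b * c - c * b) = 0.
  have Ir : right_ideal I.
    rewrite /I; split.
    + by split; [move=> y; rewrite mul0r mulr0 | move=> *; rewrite !mul0r].
    + move=> u v [cu hu] [cv hv]; split.
        by move=> y; rewrite mulrBl mulrBr cu cv.
      by move=> a b c; rewrite mulrBl mulrBl hu hv subrr.
    + move=> u r [cu hu]; split.
        move=> y; have k := hu 1 r y.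
        rewrite mulr1 mulrBr in k; move/eqP: k; rewrite subr_eq0 => /eqP k.
        by rewrite -mulrA k !mulrA (cu y).
      by move=> a b c; rewrite -(mulrA u) hu.
  have HI : I x.
    apply: (Hx I Ir).
    move=> S mS s Ss; split; first exact: P1 S mS s Ss.
    move=> a b c; have Sa : S (s * a) by case: (mS) => [[_ _ SM] _ _]; apply: SM.
    exact: (comm_kill b c C mS Sa).
  by case: HI.
Qed.
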